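(* Let $N$ be a finite set and $\mathcal{F} \subseteq 2^N$ a set family. If $\mathcal{F}$ satisfies (B$^\natural$-EXC$_{\rm m}$), then $\mathcal{F}$ satisfies (B$^\natural$-EXC$_{\pm}$).
   Context: Notation: $X - i = X \setminus \{i\}$, $Y + i = Y \cup \{i\}$, $X - i + j = (X\setminus\{i\})\cup\{j\}$, $Y + i - k = (Y \cup\{i\})\setminus\{k\}$. (B$^\natural$-EXC$_{\rm m}$): for any $X, Y \in \mathcal{F}$ and $I \subseteq X\setminus Y$ there exists $J \subseteq Y\setminus X$ with $(X\setminus I)\cup J \in \mathcal{F}$ and $(Y\setminus J)\cup I \in \mathcal{F}$. (B$^\natural$-EXC$_{\pm}$): for any $X, Y \in \mathcal{F}$ and $i \in X\setminus Y$, both (a) and (b) hold, where (a): $X - i \in \mathcal{F}$, or $X - i + j \in \mathcal{F}$ for some $j \in Y\setminus X$; (b): $Y + i \in \mathcal{F}$, or $Y + i - k \in \mathcal{F}$ for some $k \in Y\setminus X$. *)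

(* Defs.v *)
From mathcomp Require Import all_boot.
Set Implicit Arguments. Unset Strict Implicit. Unset Printing Implicit Defensive.

Definition exc_m (N : finType) (F : {set {set N}}) : Prop :=
  forall X Y : {set N}, X \in F -> Y \in F ->
  forall I : {set N}, I \subset X :\: Y ->
  exists J : {set N}, [/\ J \subset Y :\: X,
                          (X :\: I) :|: J \in F &
                          (Y :\: J) :|: I \in F].

(* (B♮-EXC_±): for X, Y in F and i ∈ X \ Y, both
   (a) X - i ∈ F or X - i + j ∈ F for some j ∈ Y \ X, and
   (b) Y + i ∈ F or Y + i - k ∈ F for some k ∈ Y \ X. *)
Definition exc_pm (N : finType) (F : {set {set N}}) : Prop :=
  forall X Y : {set N}, X \in F -> Y \in F ->
  forall i : N, i \in X :\: Y ->
  (X :\ i \in F \/ exists2 j, j \in Y :\: X & j |: (X :\ i) \in F) /\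
  (i |: Y \in F \/ exists2 k, k \in Y :\: X & (i |: Y) :\ k \in F).

(* Main.v *)
Require Import Defs.
From mathcomp Require Import all_boot.

Section S.
Variables (N : finType) (F : {set {set N}}).
Hypothesis hm : exc_m F.

Lemma partA (X : {set N}) (i : N) : X \in F -> i \in X ->
  forall n (J : {set N}), #|J| <= n -> (forall x, x \in J -> x \notin X) ->
  (X :\ i) :|: J \in F ->
  X :\ i \in F \/ exists2 j, j \in J & j |: (X :\ i) \in F.
Proof.
move=> XF iX; elim=> [|n IH] J cJ dJ XJ.
  move: cJ; rewrite leqn0 cards_eq0 => /eqP J0; left; by move: XJ; rewrite J0 setU0.
case: (set_0Vmem J) => [J0|[j jJ]].
  by left; move: XJ; rewrite J0 setU0.
have sub : J :\ j \subset ((X :\ i) :|: J) :\: X.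
  apply/subsetP=> x; rewrite !inE => /andP[_ xJ]; rewrite xJ orbT andbT.
  exact: dJ.
have [J' [sJ' h1 h2]] := hm _ _ XJ XF _ sub.
have sJ1 : J' \subset [set i].
  apply: (subset_trans sJ'); apply/subsetP=> x; rewrite !inE.
  case/andP=> H xX; case: (eqVneq x i) => // xi; move: H.
  by rewrite xi xX.
move: sJ1; rewrite subset1 => /orP[/eqP E|/eqP E]; rewrite E in h1 h2.
- have e : X :\: [set i] :|: (J :\ j) = (X :\ i) :|: (J :\ j) by [].
  have c1 : #|J :\ j| <= n by rewrite (cardsD1 j J) jJ in cJ.
  have d1 : forall x, x \in J :\ j -> x \notin X.
    by move=> x; rewrite inE => /andP[_]; exact: dJ.
  have [|] := IH (J :\ j) c1 d1 h2.
  + by left.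
  + by case=> k; rewrite inE => /andP[_ kJ] H; right; exists k.
- right; exists j => //; move: h1; rewrite setU0.
  congr (_ \in F); apply/setP=> x; rewrite !inE.
  case: (eqVneq x j) => [->|xj] /=; first by rewrite jJ orbT.
  case xJ: (x \in J) => /=; last by rewrite orbF.
  by rewrite (negbTE (dJ x xJ)) andbF.
Qed.

Lemma partB (Y : {set N}) (i : N) : Y \in F -> i \notin Y ->
  forall n (J : {set N}), #|J| <= n -> J \subset Y ->
  (Y :\: J) :|: [set i] \in F ->
  i |: Y \in F \/ exists2 k, k \in J & (i |: Y) :\ k \in F.
Proof.
move=> YF iY; elim=> [|n IH] J cJ sJ YJ.
  move: cJ; rewrite leqn0 cards_eq0 => /eqP J0; left; move: YJ; rewrite J0 setD0.
  by rewrite setUC.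
case: (set_0Vmem J) => [J0|[k kJ]].
  by left; move: YJ; rewrite J0 setD0 setUC.
have sub : J :\ k \subset Y :\: ((Y :\: J) :|: [set i]).
  apply/subsetP=> x; rewrite !inE => /andP[_ xJ]; rewrite xJ /=.
  have xY : x \in Y by apply: (subsetP sJ).
  by rewrite xY andbT; apply/negP=> /eqP xi; move: iY; rewrite -xi xY.
have [J' [sJ' h1 h2]] := hm _ _ YF YJ _ sub.
have sJ1 : J' \subset [set i].
  apply: (subset_trans sJ'); apply/subsetP=> x; rewrite !inE.
  case/andP=> H xY; case: (eqVneq x i) => // xi; move: H.
  by rewrite (negbTE xi) orbF in xY; case/andP: xY => _ ->.
move: sJ1; rewrite subset1 => /orP[/eqP E|/eqP E]; rewrite E in h1 h2.
- have c1 : #|J :\ k| <= n by rewrite (cardsD1 k J) kJ in cJ.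
  have d1 : J :\ k \subset Y by apply: subset_trans sJ; apply: subD1set.
  have [|] := IH (J :\ k) c1 d1 h1.
  + by left.
  + by case=> l; rewrite inE => /andP[_ lJ] H; right; exists l.
- right; exists k => //; move: h2; rewrite setD0.
  congr (_ \in F); apply/setP=> x; rewrite !inE.
  case: (eqVneq x k) => [->|xk] /=.
    by rewrite kJ orbF /=; apply/negP=> /eqP ki; move: iY; rewrite -ki (subsetP sJ k kJ).
  case xJ: (x \in J) => /=; last by rewrite orbF orbC.
  by rewrite orbT (subsetP sJ x xJ) orbT.
Qed.

End S.

Theorem proposition5 (N : finType) (F : {set {set N}}) :
  exc_m F -> exc_pm F.
Proof.
move=> hm X Y XF YF i iXY.
have iX : i \in X by move: iXY; rewrite inE => /andP[].
have iY : i \notin Y by move: iXY; rewrite inE => /andP[].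
have sI : [set i] \subset X :\: Y by rewrite sub1set.
have [J [sJ h1 h2]] := hm X Y XF YF _ sI.
split.
- have d1 : forall x, x \in J -> x \notin X.
    by move=> x xJ; move: (subsetP sJ x xJ); rewrite inE => /andP[].
  have [|] := @partA N F hm X i XF iX _ J (leqnn #|J|) d1 h1.
  + by left.
  + by case=> j jJ H; right; exists j => //; apply: (subsetP sJ).
- have d1 : J \subset Y by apply: (subset_trans sJ); apply: subsetDl.
  have [|] := @partB N F hm Y i YF iY _ J (leqnn #|J|) d1 h2.
  + by left.
  + by case=> k kJ H; right; exists k => //; apply: (subsetP sJ).
Qed.
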